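(* Let $s$ be a sequence of positive integers. If $L_1,L_2\subseteq S_s$ are zig-zag languages, then $L_1\cap L_2$ and $L_1\cup L_2$ are zig-zag languages.
   Context: For a sequence $s=(s_1,\dots,s_m)$ of positive integers, an $s$-word is a word with exactly $s_i$ copies of $i$ for each $i\in[m]$; $S_s$ is the set of $s$-words. Parent operation: $p(s)=(s_1,\dots,s_{m-1},s_m-1)$ if $s_m>1$ and $p(s)=(s_1,\dots,s_{m-1})$ if $s_m=1$; for an $s$-word $w$, $p(w)$ deletes the rightmost copy of $m$; $p(L)=\{p(w):w\in L\}$. Zig-zag language (recursive on $n=\sum s_i$): for the empty sequence the only zig-zag language is $\{\varepsilon\}$. For $n\ge1$, $L\subseteq S_s$ is zig-zag if $p(L)$ is a zig-zag language of $p(s)$-words and for every $w'\in p(L)$ both of the following lie in $L$: (a) $w'm$, and (b) $mw'$ if $s_m=1$, or, if $s_m>1$, the word obtained by inserting $m$ immediately next to the rightmost $m$ of $w'$. *)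

(* Defs.v *)
(* Words are sequences of letters 1..m (nat). *)
From mathcomp Require Import all_boot.
Set Implicit Arguments. Unset Strict Implicit. Unset Printing Implicit Defensive.

Definition language := seq nat -> Prop.

Definition is_sword (s : seq nat) (w : seq nat) : bool :=
  all (fun x => (0 < x) && (x <= size s)) w &&
  all (fun i => count_mem i.+1 w == nth 0 s i) (iota 0 (size s)).

Definition pseq (s : seq nat) : seq nat :=
  let sm := last 0 s in
  if 1 < sm then rcons (take (size s).-1 s) sm.-1 else take (size s).-1 s.

Definition pword (m : nat) (w : seq nat) : seq nat := rev (rem m (rev w)).

Definition plang (m : nat) (L : language) : language :=
  fun w' => exists w, L w /\ w' = pword m w.

Definition ins_rightmost (m : nat) (w : seq nat) : seq nat :=
  let u := rev w in
  rev (take (index m u) u ++ m :: drop (index m u) u).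

(* zig-zag languages, recursion on n = sum s (fuel) *)
Fixpoint zigzag_n (n : nat) (s : seq nat) (L : language) : Prop :=
  match n with
  | 0 => s = [::] /\ (forall w, L w <-> w = [::])
  | n'.+1 =>
      let m := size s in
      let sm := last 0 s in
      (forall w, L w -> is_sword s w) /\
      zigzag_n n' (pseq s) (plang m L) /\
      (forall w', plang m L w' ->
         L (rcons w' m) /\
         L (if sm == 1 then m :: w' else ins_rightmost m w'))
  end.

Definition zigzag (s : seq nat) (L : language) : Prop := zigzag_n (sumn s) s L.

(* Main.v *)
Require Import Defs.
From mathcomp Require Import all_boot.

Lemma zz_ext n : forall s (L L' : language), (forall w, L w <-> L' w) ->
  zigzag_n n s L -> zigzag_n n s L'.
Proof.
elim: n => [|n IH] s L L' E /=.
  by move=> [-> H]; split => // w; split => [/E/H|/H/E].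
move=> [H1 [H2 H3]]; split; first by move=> w /E; apply: H1.
have EP : forall w, plang (size s) L w <-> plang (size s) L' w.
  by move=> w; split => -[x [Hx ->]]; exists x; split => //; apply/E.
split; first exact: (IH _ _ _ EP H2).
move=> w /EP /H3 [A B]; split; exact/E.
Qed.

Lemma pword_rcons m w : pword m (rcons w m) = w.
Proof. by rewrite /pword rev_rcons /= eqxx revK. Qed.

Lemma zz_main n : forall s (L1 L2 : language),
  zigzag_n n s L1 -> zigzag_n n s L2 ->
  zigzag_n n s (fun w => L1 w /\ L2 w) /\ zigzag_n n s (fun w => L1 w \/ L2 w).
Proof.
elim: n => [|n IH] s L1 L2 /=.
  move=> [-> A] [_ B]; split; split => // w; have := A w; have := B w; tauto.
move=> [A1 [A2 A3]] [B1 [B2 B3]].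
have [IHI IHU] := IH _ _ _ A2 B2.
have EI : forall w, (plang (size s) L1 w /\ plang (size s) L2 w) <->
   plang (size s) (fun w => L1 w /\ L2 w) w.
  move=> w; split.
    move=> [/A3 [C1 _] /B3 [D1 _]]; exists (rcons w (size s)).
    by rewrite pword_rcons.
  by move=> [x [[Hx Hy] ->]]; split; exists x.
have EU : forall w, (plang (size s) L1 w \/ plang (size s) L2 w) <->
   plang (size s) (fun w => L1 w \/ L2 w) w.
  move=> w; split.
    by move=> [] [x [Hx ->]]; exists x; split => //; [left|right].
  by move=> [x [[Hx|Hx] ->]]; [left|right]; exists x.
split; split.
- by move=> w [/A1].
- split; first exact: (zz_ext _ _ _ _ EI IHI).
  move=> w /EI [/A3 [C1 C2] /B3 [D1 D2]]; by [].
- by move=> w [/A1|/B1].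
- split; first exact: (zz_ext _ _ _ _ EU IHU).
  move=> w /EU [/A3 [C1 C2]|/B3 [D1 D2]]; split; by [left|right].
Qed.

Theorem mainTheorem5 (s : seq nat) (L1 L2 : language) :
  all (fun x => 0 < x) s ->
  zigzag s L1 -> zigzag s L2 ->
  zigzag s (fun w => L1 w /\ L2 w) /\ zigzag s (fun w => L1 w \/ L2 w).
Proof. move=> _; exact: zz_main. Qed.
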